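(* Let $\mathcal{A}$ be a commutative unital $C^*$-algebra and let $F\in B^a(H_{\mathcal{A}})$ be self-adjoint. Then $\sigma_p^{\mathcal{A}}(F)$ is a self-adjoint subset of $\mathcal{A}$, i.e. $\alpha\in\sigma_p^{\mathcal{A}}(F)$ if and only if $\alpha^*\in\sigma_p^{\mathcal{A}}(F)$.
   Context: $H_{\mathcal{A}}=l_2(\mathcal{A})$ is the standard Hilbert $C^*$-module of sequences $(x_1,x_2,\dots)$ in $\mathcal{A}$ with $\sum_k x_k^*x_k$ norm-convergent, inner product $\langle x,y\rangle=\sum_k x_k^*y_k$. $B^a(H_{\mathcal{A}})$ denotes the bounded adjointable $\mathcal{A}$-linear operators on $H_{\mathcal{A}}$. For $\alpha\in\mathcal{A}$, $\alpha I$ is the operator $(x_k)\mapsto(\alpha x_k)$. $\sigma_p^{\mathcal{A}}(F)=\{\alpha\in\mathcal{A}\mid\ker(F-\alpha I)\ne\{0\}\}$. *)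

(* Defs.v *)
From mathcomp Require Import all_boot all_order all_algebra.
From mathcomp Require Import complex.
From mathcomp Require Import reals.
From Stdlib Require Import ClassicalEpsilon.

Set Implicit Arguments.
Unset Strict Implicit.
Unset Printing Implicit Defensive.

Import Order.TTheory GRing.Theory Num.Theory.
Local Open Scope ring_scope.

(* A commutative unital complex algebra is a comAlgType R[i]; the C*-structure
   (norm, involution) is given by explicit data [nrm] and [star] subject to
   the axioms in [is_CStar]. *)

Section CStar.
Variables (R : realType) (A : comAlgType R[i]).
Variables (nrm : A -> R) (star : A -> A).

Definition conv (u : nat -> A) (l : A) : Prop :=
  forall eps : R, 0 < eps -> exists N : nat, forall n : nat, (N <= n)%N ->
    nrm (u n - l) < eps.

Definition cauchy (u : nat -> A) : Prop :=
  forall eps : R, 0 < eps -> exists N : nat, forall m n : nat,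
    (N <= m)%N -> (N <= n)%N -> nrm (u m - u n) < eps.

Record is_CStar : Prop := {
  nrm_ge0 : forall x, 0 <= nrm x;
  nrm_eq0 : forall x, nrm x = 0 -> x = 0;
  nrm_triangle : forall x y, nrm (x + y) <= nrm x + nrm y;
  nrm_scale : forall (c : R[i]) x, nrm (c *: x) = @Normc.normc R c * nrm x;
  nrm_submul : forall x y, nrm (x * y) <= nrm x * nrm y;
  nrm_complete : forall u, cauchy u -> exists l, conv u l;
  star_add : forall x y, star (x + y) = star x + star y;
  star_scale : forall (c : R[i]) x, star (c *: x) = (conjc c) *: star x;
  star_mul : forall x y, star (x * y) = star y * star x;
  star_invol : forall x, star (star x) = x;
  cstar_identity : forall x, nrm (star x * x) = nrm x ^+ 2
}.

Definition is_l2 (x : nat -> A) : Prop :=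
  exists s : A, conv (fun n => \sum_(k < n) star (x k) * x k) s.

Definition ip (x y : nat -> A) : A :=
  epsilon (inhabits 0)
    (fun s => conv (fun n => \sum_(k < n) star (x k) * y k) s).

Definition is_Ba (F : (nat -> A) -> (nat -> A)) : Prop :=
  [/\ (forall x, is_l2 x -> is_l2 (F x)),
      (forall x y, is_l2 x -> is_l2 y ->
          F (fun k => x k + y k) = (fun k => F x k + F y k)),
      (forall x (a : A), is_l2 x ->
          F (fun k => x k * a) = (fun k => F x k * a)),
      (exists M : R, forall x, is_l2 x -> nrm (ip (F x) (F x)) <= M * nrm (ip x x))
    & (exists G : (nat -> A) -> (nat -> A),
          (forall y, is_l2 y -> is_l2 (G y)) /\
          (forall x y, is_l2 x -> is_l2 y -> ip (F x) y = ip x (G y)))].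

Definition is_selfadjoint (F : (nat -> A) -> (nat -> A)) : Prop :=
  forall x y, is_l2 x -> is_l2 y -> ip (F x) y = ip x (F y).

Definition in_sigma_p (F : (nat -> A) -> (nat -> A)) (alpha : A) : Prop :=
  exists x : nat -> A, [/\ is_l2 x, x <> (fun _ => 0) &
    (fun k => F x k - alpha * x k) = (fun _ => 0)].

End CStar.

(* Main.v *)
Require Import Defs.
From mathcomp Require Import all_boot all_order all_algebra.
From mathcomp Require Import complex.
From mathcomp Require Import reals.
From mathcomp Require Import ring lra.
From Stdlib Require Import ClassicalEpsilon FunctionalExtensionality.
Import Order.TTheory GRing.Theory Num.Theory.
Local Open Scope ring_scope.

Set Implicit Arguments.
Unset Strict Implicit.

Lemma normcR (R : realType) (r : R) : Normc.normc (r%:C)%C = `|r|.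
Proof. by rewrite /= expr0n /= addr0 sqrtr_sqr. Qed.

Definition cst {R : realType} {A : comAlgType R[i]} (r : R) : A := (r%:C)%C *: 1.

Lemma nrmZR {R : realType} {A : comAlgType R[i]} {nrm : A -> R} {star : A -> A}
  (HA : is_CStar nrm star) r x : nrm ((r%:C)%C *: x) = `|r| * nrm x.
Proof. by rewrite (nrm_scale HA) normcR. Qed.

Lemma nrm0 {R : realType} {A : comAlgType R[i]} {nrm : A -> R} {star : A -> A}
  (HA : is_CStar nrm star) : nrm 0 = 0.
Proof. by have h := nrm_scale HA 0 0; rewrite scale0r Normc.normc0 mul0r in h. Qed.

Lemma nrmN {R : realType} {A : comAlgType R[i]} {nrm : A -> R} {star : A -> A}
  (HA : is_CStar nrm star) x : nrm (- x) = nrm x.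
Proof. by rewrite -scaleN1r (nrm_scale HA) normcN Normc.normc1 mul1r. Qed.

Lemma nrmBC {R : realType} {A : comAlgType R[i]} {nrm : A -> R} {star : A -> A}
  (HA : is_CStar nrm star) x y : nrm (x - y) = nrm (y - x).
Proof. by rewrite -opprB (nrmN HA). Qed.

Lemma star0 {R : realType} {A : comAlgType R[i]} {nrm : A -> R} {star : A -> A}
  (HA : is_CStar nrm star) : star 0 = 0.
Proof. by have h := star_scale HA 0 0; rewrite conjc0 !scale0r in h. Qed.

Lemma starN {R : realType} {A : comAlgType R[i]} {nrm : A -> R} {star : A -> A}
  (HA : is_CStar nrm star) x : star (- x) = - star x.
Proof. by rewrite -scaleN1r (star_scale HA) rmorphN1 scaleN1r. Qed.

Lemma starB {R : realType} {A : comAlgType R[i]} {nrm : A -> R} {star : A -> A}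
  (HA : is_CStar nrm star) x y : star (x - y) = star x - star y.
Proof. by rewrite (star_add HA) (starN HA). Qed.

Lemma star1 {R : realType} {A : comAlgType R[i]} {nrm : A -> R} {star : A -> A}
  (HA : is_CStar nrm star) : star 1 = 1.
Proof.
have e : star (star (1 : A) * 1) = star 1 * 1 by rewrite (star_mul HA) (star_invol HA).
by rewrite mulr1 (star_invol HA) in e.
Qed.

Lemma nrm_star {R : realType} {A : comAlgType R[i]} {nrm : A -> R} {star : A -> A}
  (HA : is_CStar nrm star) x : nrm (star x) = nrm x.
Proof.
have key : forall y, nrm y <= nrm (star y).
  move=> y; have [y0|yn0] := eqVneq y 0.
    by rewrite y0 (star0 HA).
  have hp : 0 < nrm y.
    rewrite lt_def (nrm_ge0 HA) andbT; apply/eqP => /(nrm_eq0 HA) /eqP.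
    by rewrite (negbTE yn0).
  have h := nrm_submul HA (star y) y; rewrite (cstar_identity HA) expr2 in h.
  by rewrite -(ler_pM2r hp).
apply/eqP; rewrite eq_le key andbT.
by have := key (star x); rewrite (star_invol HA).
Qed.

Lemma nrm1 {R : realType} {A : comAlgType R[i]} {nrm : A -> R} {star : A -> A}
  (HA : is_CStar nrm star) : nrm (1 : A) = 1.
Proof.
have h := cstar_identity HA 1; rewrite (star1 HA) mulr1 expr2 in h.
have hp : 0 < nrm (1 : A).
  rewrite lt_def (nrm_ge0 HA) andbT; apply/eqP => /(nrm_eq0 HA) /eqP.
  by rewrite oner_eq0.
by apply: (mulIf (lt0r_neq0 hp)); rewrite mul1r -h.
Qed.

Lemma nrm_sa2 {R : realType} {A : comAlgType R[i]} {nrm : A -> R} {star : A -> A}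
  (HA : is_CStar nrm star) u : star u = u -> nrm (u * u) = nrm u ^+ 2.
Proof. by move=> su; rewrite -{1}su (cstar_identity HA). Qed.

Lemma cstE {R : realType} {A : comAlgType R[i]} r x : (cst r : A) * x = (r%:C)%C *: x.
Proof. by rewrite /cst -scalerAl mul1r. Qed.

Lemma cstD {R : realType} {A : comAlgType R[i]} r s : (cst (r + s) : A) = cst r + cst s.
Proof. by rewrite /cst rmorphD scalerDl. Qed.

Lemma cstM {R : realType} {A : comAlgType R[i]} r s : (cst (r * s) : A) = cst r * cst s.
Proof. by rewrite cstE /cst rmorphM scalerA. Qed.

Lemma cst1 {R : realType} {A : comAlgType R[i]} : (cst 1 : A) = 1.
Proof. by rewrite /cst rmorph1 scale1r. Qed.

Lemma cst0 {R : realType} {A : comAlgType R[i]} : (cst 0 : A) = 0.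
Proof. by rewrite /cst rmorph0 scale0r. Qed.

Lemma star_cst {R : realType} {A : comAlgType R[i]} {nrm : A -> R} {star : A -> A}
  (HA : is_CStar nrm star) r : star (cst r) = cst r.
Proof. by rewrite /cst (star_scale HA) conjc_real (star1 HA). Qed.

Lemma nrm_cstM {R : realType} {A : comAlgType R[i]} {nrm : A -> R} {star : A -> A}
  (HA : is_CStar nrm star) r x : nrm (cst r * x) = `|r| * nrm x.
Proof. by rewrite cstE (nrmZR HA). Qed.

Lemma nrm_cst {R : realType} {A : comAlgType R[i]} {nrm : A -> R} {star : A -> A}
  (HA : is_CStar nrm star) r : nrm (cst r : A) = `|r|.
Proof. by rewrite -[cst r]mulr1 (nrm_cstM HA) (nrm1 HA) mulr1. Qed.

Lemma small_eq0 {R : realType} (a : R) : 0 <= a -> (forall eps, 0 < eps -> a < eps) -> a = 0.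
Proof.
move=> a0 h; apply/eqP; rewrite eq_le a0 andbT; rewrite leNgt; apply/negP => ap.
by have := h a ap; rewrite ltxx.
Qed.

Lemma nrm_triB {R : realType} {A : comAlgType R[i]} {nrm : A -> R} {star : A -> A}
  (HA : is_CStar nrm star) x y z : nrm (x - z) <= nrm (x - y) + nrm (y - z).
Proof. by have := nrm_triangle HA (x - y) (y - z); rewrite addrA subrK. Qed.

Lemma conv_uniq {R : realType} {A : comAlgType R[i]} {nrm : A -> R} {star : A -> A}
  (HA : is_CStar nrm star) u l1 l2 : conv nrm u l1 -> conv nrm u l2 -> l1 = l2.
Proof.
move=> h1 h2; apply/eqP; rewrite -subr_eq0; apply/eqP; apply: (nrm_eq0 HA).
apply: small_eq0; first by apply: (nrm_ge0 HA).
move=> e e0; have e2 : 0 < e / 2 by rewrite divr_gt0.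
have [N1 HN1] := h1 _ e2; have [N2 HN2] := h2 _ e2.
have a1 := HN1 (maxn N1 N2) (leq_maxl _ _).
have a2 := HN2 (maxn N1 N2) (leq_maxr _ _).
apply: (le_lt_trans (nrm_triB HA _ (u (maxn N1 N2)) _)).
rewrite (nrmBC HA); apply: (lt_le_trans (ltrD a1 a2)); lra.
Qed.

Lemma conv_const {R : realType} {A : comAlgType R[i]} {nrm : A -> R} {star : A -> A}
  (HA : is_CStar nrm star) a : conv nrm (fun _ => a) a.
Proof. by move=> e e0; exists 0%N => n _; rewrite subrr (nrm0 HA). Qed.

Lemma conv_mull {R : realType} {A : comAlgType R[i]} {nrm : A -> R} {star : A -> A}
  (HA : is_CStar nrm star) u l c : conv nrm u l -> conv nrm (fun n => c * u n) (c * l).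
Proof.
move=> h e e0.
have c0 := nrm_ge0 HA c.
have e1 : 0 < e / (nrm c + 1) by rewrite divr_gt0 // ltr_wpDl.
have [N HN] := h _ e1; exists N => n Nn.
rewrite -mulrBr; apply: (le_lt_trans (nrm_submul HA _ _)).
have := HN n Nn; have := nrm_ge0 HA (u n - l).
set a := nrm (u n - l) => a0 ha.
have : nrm c * a <= (nrm c + 1) * a by rewrite ler_wpM2r // lerDl.
move=> h3; apply: (le_lt_trans h3).
by rewrite mulrC -ltr_pdivlMr ?ltr_wpDl.
Qed.

Lemma conv_star {R : realType} {A : comAlgType R[i]} {nrm : A -> R} {star : A -> A}
  (HA : is_CStar nrm star) u l : conv nrm u l -> conv nrm (fun n => star (u n)) (star l).
Proof.
move=> h e e0; have [N HN] := h _ e0; exists N => n Nn.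
by rewrite -(starB HA) (nrm_star HA); apply: HN.
Qed.

Lemma conv_ext {R : realType} {A : comAlgType R[i]} {nrm : A -> R} u v l :
  (forall n, u n = v n) -> conv nrm u l -> conv nrm v l.
Proof. by move=> huv h e e0; have [N HN] := h _ e0; exists N => n Nn; rewrite -huv; apply: HN. Qed.


Lemma conj_i {R : realType} : ('i%C : R[i])^*%C = - 'i%C.
Proof. by apply/eqP; rewrite eq_complex /= oppr0 !eqxx. Qed.

Lemma i_sqr {R : realType} : ('i%C : R[i]) * 'i%C = -1.
Proof. by rewrite -expr2 sqr_i. Qed.

Lemma nrm_le_sq {R : realType} (a b : R) : 0 <= a -> a <= b -> a ^+ 2 <= b ^+ 2.
Proof. by move=> a0 ab; rewrite !expr2; apply: ler_pM. Qed.

Lemma ring1 {A : comPzRingType} (u j a : A) : (u - j * a) * (u + j * a) = u * u - (j * j) * (a * a).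
Proof. ring. Qed.

Lemma RB {R : realType} {A : comAlgType R[i]} {nrm : A -> R} {star : A -> A}
  (HA : is_CStar nrm star) u a : star u = u -> star a = a ->
  nrm u ^+ 2 <= nrm (u * u + a * a).
Proof.
move=> su sa.
set z := u + 'i%C *: a.
have sz : star z = u - 'i%C *: a.
  by rewrite /z (star_add HA) (star_scale HA) conj_i su sa scaleNr.
have zz : star z * z = u * u + a * a.
  have jE : forall x : A, 'i%C *: x = ('i%C *: (1:A)) * x by move=> x; rewrite -scalerAl mul1r.
  rewrite sz /z (jE a) ring1.
  have -> : ('i%C *: (1:A)) * ('i%C *: 1) = -1 by rewrite -scalerAl mul1r scalerA i_sqr scaleN1r.
  by rewrite mulN1r opprK.
have uz : nrm u <= nrm z.
  have e : u + u = z + star z by rewrite sz /z addrACA subrr addr0.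
  have h := nrm_triangle HA z (star z); rewrite -e (nrm_star HA) in h.
  have e2 : u + u = cst (1 + 1) * u by rewrite cstD cst1 mulrDl mul1r.
  rewrite e2 (nrm_cstM HA) in h.
  have n2 : `|1 + 1| = 1 + 1 :> R by rewrite ger0_norm // addr_ge0.
  rewrite n2 in h; lra.
rewrite -zz (cstar_identity HA); apply: nrm_le_sq => //; apply: (nrm_ge0 HA).
Qed.

Lemma bern {R : realType} (h : R) n : 0 <= h -> 1 + n%:R * h <= (1 + h) ^+ n.
Proof.
move=> h0; elim: n => [|n IH]; first by rewrite mul0r addr0 expr0.
rewrite exprS -natr1.
have p0 : 0 <= n%:R * h by rewrite mulr_ge0.
have hh : 0 <= n%:R * h * h by rewrite mulr_ge0.
nra.
Qed.

Lemma geo {R : realType} (r : R) : 0 < r -> r < 1 -> forall e, 0 < e -> exists N, r ^+ N < e.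
Proof.
move=> r0 r1 e e0.
set h := r^-1 - 1.
have h0 : 0 < h by rewrite /h subr_gt0 invf_gt1.
have eh : 0 < e * h by rewrite mulr_gt0.
set N := Num.Def.archi_bound (e * h)^-1.
have C : (e * h)^-1 < N%:R by apply: archi_boundP; rewrite invr_ge0 ltW.
have C2 : 1 < N%:R * (e * h) by rewrite -ltr_pdivrMr // div1r.
have B := bern N (ltW h0).
have E : 1 + h = r^-1 by rewrite /h addrC subrK.
rewrite E exprVn in B.
have pN : 0 < r ^+ N by rewrite exprn_gt0.
have B2 : r ^+ N * (1 + N%:R * h) <= 1.
  by have := ler_wpM2l (ltW pN) B; rewrite mulfV // lt0r_neq0.
exists N; rewrite ltNge; apply/negP => H.
have N0 : 0 <= N%:R :> R by [].
have : e * (N%:R * h) <= r ^+ N * (N%:R * h) by rewrite ler_wpM2r // mulr_ge0 // ltW.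
nra.
Qed.

Fixpoint sqit {R : realType} {A : comAlgType R[i]} (X : A) (n : nat) : A :=
  match n with 0%N => 0 | S m => cst (2^-1) * (X + sqit X m * sqit X m) end.

Lemma conv_shift {R : realType} {A : comAlgType R[i]} {nrm : A -> R} u l :
  conv nrm u l -> conv nrm (fun n => u n.+1) l.
Proof. by move=> h e e0; have [N HN] := h _ e0; exists N => n Nn; apply: HN; apply: leqW. Qed.

Lemma conv_addl {R : realType} {A : comAlgType R[i]} {nrm : A -> R} u l c :
  conv nrm u l -> conv nrm (fun n => c + u n) (c + l).
Proof.
move=> h e e0; have [N HN] := h _ e0; exists N => n Nn.
by rewrite opprD addrACA subrr add0r; apply: HN.
Qed.

Lemma ring2 {A : comPzRingType} (u v a b : A) : u * u - v * v = (u - v) * (u + v).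
Proof. ring. Qed.

Lemma ring4 {A : comPzRingType} (c X a b : A) : c * (X + a * a) - c * (X + b * b) = c * ((a - b) * (a + b)).
Proof. ring. Qed.

Lemma conv_sq {R : realType} {A : comAlgType R[i]} {nrm : A -> R} {star : A -> A}
  (HA : is_CStar nrm star) u l B : (forall n, nrm (u n) <= B) ->
  conv nrm u l -> conv nrm (fun n => u n * u n) (l * l).
Proof.
move=> hB h e e0.
set K := B + nrm l + 1.
have B0 : 0 <= B by apply: le_trans (hB 0%N); apply: (nrm_ge0 HA).
have K0 : 0 < K by rewrite /K ltr_wpDl // addr_ge0 //; apply: (nrm_ge0 HA).
have [N HN] := h (e / K) (divr_gt0 e0 K0); exists N => n Nn.
rewrite (ring2 _ _ 0 0); apply: (le_lt_trans (nrm_submul HA _ _)).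
have a0 := nrm_ge0 HA (u n - l).
have s1 : nrm (u n + l) <= K.
  apply: (le_trans (nrm_triangle HA _ _)); have := hB n; rewrite /K; lra.
apply: (le_lt_trans (ler_wpM2l a0 s1)).
by rewrite -ltr_pdivlMr //; apply: HN.
Qed.

Lemma sqrt1 {R : realType} {A : comAlgType R[i]} {nrm : A -> R} {star : A -> A}
  (HA : is_CStar nrm star) (X : A) (r : R) : star X = X -> 0 <= r -> r < 1 -> nrm X <= r ->
  exists y, star y = y /\ y * y = 1 - X.
Proof.
move=> sX r0 r1 nX.
set h : R := 2^-1.
set rho : R := (1 + r) / 2.
set T := sqit X.
have h0 : 0 < h by rewrite /h invr_gt0.
have hh : h + h = 1 by rewrite /h; field.
have nh : `|h| = h by rewrite ger0_norm // ltW.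
have rho0 : 0 < rho by rewrite /rho divr_gt0 // ltr_wpDr.
have rho1 : rho < 1 by rewrite /rho ltr_pdivrMr // mul1r; lra.
have rhoe : rho = h * (1 + r) by rewrite /rho mulrC.
have TS : forall n, T n.+1 = cst h * (X + T n * T n) by [].
have bnd : forall n, nrm (T n) <= rho.
  elim=> [|n IH]; first by rewrite /T /= (nrm0 HA) ltW.
  rewrite TS (nrm_cstM HA) nh.
  have a1 := nrm_triangle HA X (T n * T n).
  have a2 := nrm_submul HA (T n) (T n).
  have a3 := nrm_ge0 HA (T n).
  have a4 : nrm (T n) * nrm (T n) <= rho * rho by apply: ler_pM.
  have a5 : h * (r + rho * rho) <= rho by rewrite rhoe; nra.
  apply: le_trans a5; rewrite ler_pM2l //; lra.
have saT : forall n, star (T n) = T n.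
  elim=> [|n IH]; first by rewrite /T /= (star0 HA).
  by rewrite TS (star_mul HA) (star_cst HA) (star_add HA) (star_mul HA) IH sX mulrC.
have dif : forall n, nrm (T n.+2 - T n.+1) <= rho * nrm (T n.+1 - T n).
  move=> n; have E := ring4 (cst h) X (T n.+1) (T n).
  rewrite -(TS n.+1) -(TS n) in E.
  rewrite E (nrm_cstM HA) nh.
  have a1 := nrm_submul HA (T n.+1 - T n) (T n.+1 + T n).
  have a2 := nrm_triangle HA (T n.+1) (T n).
  have a3 := nrm_ge0 HA (T n.+1 - T n).
  have a4 := bnd n.+1; have a5 := bnd n.
  have a6 : nrm (T n.+1 - T n) * nrm (T n.+1 + T n) <= nrm (T n.+1 - T n) * (rho + rho).
    by apply: ler_wpM2l => //; lra.
  have a7 : h * (rho + rho) = rho by rewrite mulrDr -mulrDl hh mul1r.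
  apply: (le_trans (ler_wpM2l (ltW h0) (le_trans a1 a6))).
  by rewrite mulrCA a7 [_ * rho]mulrC.
have geomb : forall n, nrm (T n.+1 - T n) <= rho ^+ n * rho.
  elim=> [|n IH].
    rewrite expr0 mul1r TS /T /= mulr0 addr0 subr0 (nrm_cstM HA) nh rhoe.
    rewrite ler_pM2l //; lra.
  apply: (le_trans (dif n)); rewrite exprS -mulrA ler_pM2l //.
set kap := (1 - rho)^-1.
have kap0 : 0 < kap by rewrite /kap invr_gt0 subr_gt0.
have kapE : kap * (1 - rho) = 1 by rewrite /kap mulVf // subr_eq0 eq_sym lt_eqF.
have sumb : forall n k, nrm (T (n + k)%N - T n) <= kap * (rho ^+ n.+1 - rho ^+ (n.+1 + k)).
  move=> n; elim=> [|k IH]; first by rewrite !addn0 !subrr (nrm0 HA) mulr0.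
  apply: (le_trans (nrm_triB HA _ (T (n + k)%N) _)).
  rewrite addnS; have g := geomb (n + k)%N.
  rewrite -exprSr -addSn in g.
  set p := rho ^+ (n.+1 + k) in g IH *.
  have -> : rho ^+ (n.+1 + k.+1) = p * rho by rewrite addnS exprSr.
  have -> : kap * (rho ^+ n.+1 - p * rho) = kap * (rho ^+ n.+1 - p) + (kap * (1 - rho)) * p by ring.
  rewrite kapE mul1r; lra.
have cau : cauchy nrm T.
  move=> e e0.
  have e1 : 0 < e * (1 - rho) by rewrite mulr_gt0 // subr_gt0.
  have [N HN] := geo rho0 rho1 e1.
  have key : forall n k, (N <= n)%N -> nrm (T (n + k)%N - T n) < e.
    move=> n k Nn; apply: (le_lt_trans (sumb n k)).
    have p0 : 0 <= rho ^+ (n.+1 + k) by rewrite exprn_ge0 // ltW.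
    have p1 : rho ^+ n.+1 <= rho ^+ N by apply: ler_wiXn2l; rewrite ?ltW // leqW.
    have : kap * (rho ^+ n.+1 - rho ^+ (n.+1 + k)) <= kap * rho ^+ N.
      by rewrite ler_pM2l //; lra.
    move/le_lt_trans; apply.
    have r1p : 0 < 1 - rho by rewrite subr_gt0.
    by rewrite -(ltr_pM2r r1p) mulrAC kapE mul1r.
  exists N => m n Nm Nn.
  case: (leqP n m) => nm.
    by rewrite -(subnKC nm); apply: key.
  by rewrite (nrmBC HA) -(subnKC (ltnW nm)); apply: key.
have [l Hl] := nrm_complete HA cau.
have fix1 : l = cst h * (X + l * l).
  apply: (conv_uniq HA (conv_shift Hl)).
  apply: (conv_ext (u := fun n => cst h * (X + T n * T n))) => //.
  apply: (conv_mull HA); apply: conv_addl; exact: (conv_sq HA bnd Hl).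
have sl : star l = l.
  apply: (conv_uniq HA (u := T)) => //.
  apply: (conv_ext (u := fun n => star (T n))) => //; exact: (conv_star HA Hl).
have ll : l + l = X + l * l.
  by rewrite {1 2}fix1 -mulrDl -cstD hh cst1 mul1r.
exists (1 - l); split; first by rewrite (starB HA) (star1 HA) sl.
have -> : (1 - l) * (1 - l) = 1 - (l + l) + l * l by ring.
by rewrite ll opprD addrA subrK.
Qed.

Lemma sqrtS {R : realType} {A : comAlgType R[i]} {nrm : A -> R} {star : A -> A}
  (HA : is_CStar nrm star) (Y : A) (mu r : R) : star Y = Y -> 0 < mu -> 0 <= r -> r < 1 ->
  nrm (cst mu - Y) <= r * mu -> exists m, star m = m /\ m * m = Y.
Proof.
move=> sY mu0 r0 r1 hn.
set X := cst (mu^-1) * (cst mu - Y).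
have sX : star X = X by rewrite /X (star_mul HA) (starB HA) (star_cst HA) sY mulrC (star_cst HA).
have nX : nrm X <= r.
  rewrite /X (nrm_cstM HA) ger0_norm; last by rewrite invr_ge0 ltW.
  rewrite -(ler_pM2l mu0) mulrA mulfV ?lt0r_neq0 // mul1r mulrC //.
have [y [sy yy]] := sqrt1 HA sX r0 r1 nX.
have e1 : (cst (mu^-1) : A) * cst mu = 1 by rewrite -cstM mulVf ?cst1 // lt0r_neq0.
have e2 : 1 - X = cst (mu^-1) * Y by rewrite /X mulrBr e1 opprB addrC subrK.
exists (cst (Num.sqrt mu) * y); split.
  by rewrite (star_mul HA) sy (star_cst HA) mulrC.
have -> : cst (Num.sqrt mu) * y * (cst (Num.sqrt mu) * y) = (cst (Num.sqrt mu) * cst (Num.sqrt mu)) * (y * y) :> A by ring.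
rewrite yy e2 -cstM -expr2 sqr_sqrtr; last exact: ltW.
by rewrite mulrA -cstM mulfV ?lt0r_neq0 // cst1 mul1r.
Qed.

Lemma ADD2 {R : realType} {A : comAlgType R[i]} {nrm : A -> R} {star : A -> A}
  (HA : is_CStar nrm star) (a k : A) (d : R) : star a = a -> star k = k -> 0 < d ->
  exists m, star m = m /\ m * m = a * a + k * k + cst d.
Proof.
move=> sa sk d0.
set lam := nrm a ^+ 2 + nrm k ^+ 2 + 1.
have na := nrm_ge0 HA a; have nk := nrm_ge0 HA k.
have pa : 0 <= nrm a ^+ 2 by rewrite exprn_ge0.
have pk : 0 <= nrm k ^+ 2 by rewrite exprn_ge0.
have lam0 : 0 < lam by rewrite /lam; lra.
have lamn : lam != 0 by rewrite lt0r_neq0.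
have [v [sv vv]] : exists v, star v = v /\ v * v = cst lam - k * k.
  apply: (sqrtS HA (mu := lam) (r := nrm k ^+ 2 / lam)) => //.
  - by rewrite (starB HA) (star_cst HA) (star_mul HA) sk.
  - by rewrite divr_ge0 // ltW.
  - by rewrite ltr_pdivrMr // mul1r /lam; lra.
  - have -> : (cst lam : A) - (cst lam - k * k) = k * k by ring.
    by rewrite (nrm_sa2 HA) // divfK.
have [u [su uu]] : exists u, star u = u /\ u * u = cst lam - (a * a + k * k).
  apply: (sqrtS HA (mu := lam) (r := (nrm a ^+ 2 + nrm k ^+ 2) / lam)) => //.
  - by rewrite (starB HA) (star_cst HA) (star_add HA) !(star_mul HA) sk sa.
  - by rewrite divr_ge0 ?addr_ge0 // ltW.
  - by rewrite ltr_pdivrMr // mul1r /lam; lra.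
  - have -> : (cst lam : A) - (cst lam - (a * a + k * k)) = a * a + k * k by ring.
    rewrite divfK //.
    by apply: (le_trans (nrm_triangle HA _ _)); rewrite !(nrm_sa2 HA).
have h3 : nrm v ^+ 2 <= lam.
  by have := RB HA sv sk; rewrite vv subrK (nrm_cst HA) ger0_norm // ltW.
have h4 : nrm u ^+ 2 <= lam.
  have := RB HA su sa; rewrite uu.
  have -> : (cst lam : A) - (a * a + k * k) + a * a = cst lam - k * k by ring.
  rewrite -vv (nrm_sa2 HA) //.
  move=> h; exact: le_trans h h3.
apply: (sqrtS HA (mu := lam + d) (r := lam / (lam + d))).
- by rewrite !(star_add HA) !(star_mul HA) (star_cst HA) sa sk.
- by rewrite addr_gt0.
- by rewrite divr_ge0 // ltW // addr_gt0.
- have ld : 0 < lam + d by rewrite addr_gt0.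
  by rewrite ltr_pdivrMr // mul1r; lra.
- have ld : 0 < lam + d by rewrite addr_gt0.
  rewrite divfK ?lt0r_neq0 //.
  have -> : cst (lam + d) - (a * a + k * k + cst d) = cst lam - (a * a + k * k) :> A.
    by rewrite cstD; ring.
  by rewrite -uu (nrm_sa2 HA).
Qed.

Definition SOSe {R : realType} {A : comAlgType R[i]} (star : A -> A) (p : A) : Prop :=
  forall d : R, 0 < d -> exists m, star m = m /\ m * m = p + cst d.

Lemma SOSe0 {R : realType} {A : comAlgType R[i]} {nrm : A -> R} {star : A -> A}
  (HA : is_CStar nrm star) : SOSe star 0.
Proof.
move=> d d0; exists (cst (Num.sqrt d)); split; first exact: (star_cst HA).
by rewrite -cstM -expr2 sqr_sqrtr ?ltW // add0r.
Qed.

Lemma SOSe_sq {R : realType} {A : comAlgType R[i]} {nrm : A -> R} {star : A -> A}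
  (HA : is_CStar nrm star) p b : SOSe star p -> star b = b -> SOSe star (p + b * b).
Proof.
move=> hp sb d d0.
have d2 : 0 < d / 2 by rewrite divr_gt0.
have [m0 [sm0 mm0]] := hp _ d2.
have [m [sm mm]] := ADD2 HA sm0 sb d2.
exists m; split => //; rewrite mm mm0.
have e : (cst d : A) = cst (d / 2) + cst (d / 2) by rewrite -cstD; congr cst; field.
rewrite e; ring.
Qed.

Lemma ring3 {A : comPzRingType} (c j w s : A) :
  (c * (w + s)) * (c * (w + s)) + (c * (j * (s - w))) * (c * (j * (s - w))) =
  c * c * (1 + 1 + 1 + 1) * (s * w) + c * c * (j * j + 1) * ((s - w) * (s - w)).
Proof. ring. Qed.

Lemma decomp {R : realType} {A : comAlgType R[i]} {nrm : A -> R} {star : A -> A}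
  (HA : is_CStar nrm star) (w : A) :
  exists a b, [/\ star a = a, star b = b & star w * w = a * a + b * b].
Proof.
set h : R := 2^-1.
set j : A := ('i%C)%:A.
exists (cst h * (w + star w)), (cst h * (j * (star w - w))); split.
- by rewrite (star_mul HA) (star_cst HA) (star_add HA) (star_invol HA) addrC mulrC.
- rewrite (star_mul HA) (star_cst HA) mulrC; congr (_ * _).
  rewrite /j mulr_algl (star_scale HA) conj_i (starB HA) (star_invol HA).
  by rewrite scaleNr -scalerN opprB.
- rewrite ring3.
  have -> : j * j + 1 = 0 by rewrite /j -scalerAl mul1r scalerA i_sqr scaleN1r addNr.
  rewrite mulr0 mul0r addr0.
  have -> : (cst h : A) * cst h * (1 + 1 + 1 + 1) = 1.
    rewrite -cstM -cst1 -!cstD -cstM; congr cst; rewrite /h; field.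
  all: by rewrite ?mul1r.
Qed.

Lemma SOSe_w {R : realType} {A : comAlgType R[i]} {nrm : A -> R} {star : A -> A}
  (HA : is_CStar nrm star) p w : SOSe star p -> SOSe star (p + star w * w).
Proof.
move=> hp; have [a [b [sa sb ->]]] := decomp HA w.
by rewrite addrA; apply: (SOSe_sq HA _ sb); apply: (SOSe_sq HA hp sa).
Qed.

Lemma SOSe_sum {R : realType} {A : comAlgType R[i]} {nrm : A -> R} {star : A -> A}
  (HA : is_CStar nrm star) (y : nat -> A) n : SOSe star (\sum_(k < n) star (y k) * y k).
Proof.
elim: n => [|n IH]; first by rewrite big_ord0; exact: (SOSe0 HA).
by rewrite big_ord_recr /=; apply: (SOSe_w HA _ IH).
Qed.

Lemma MONO {R : realType} {A : comAlgType R[i]} {nrm : A -> R} {star : A -> A}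
  (HA : is_CStar nrm star) a p : star a = a -> SOSe star p ->
  forall d, 0 < d -> nrm a ^+ 2 <= nrm (a * a + p) + d.
Proof.
move=> sa hp d d0; have [m [sm mm]] := hp _ d0.
apply: (le_trans (RB HA sa sm)); rewrite mm addrA.
apply: (le_trans (nrm_triangle HA _ _)); by rewrite (nrm_cst HA) ger0_norm // ltW.
Qed.

Lemma split_sum {R : realType} {A : comAlgType R[i]} {nrm : A -> R} {star : A -> A}
  (HA : is_CStar nrm star) (x : nat -> A) (j n : nat) : (j < n)%N ->
  \sum_(k < n) star (x k) * x k =
  star (x j) * x j + \sum_(k < n) star (if (k : nat) == j then 0 else x k) * (if (k : nat) == j then 0 else x k).
Proof.
move=> jn.
rewrite (bigD1 (Ordinal jn)) //=; congr (_ + _).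
rewrite big_mkcond; apply: eq_bigr => k _.
case: (eqVneq (k : nat) j) => [kj|kj].
  have ek : k = Ordinal jn by apply: val_inj.
  by rewrite ek ?eqxx /= ?mulr0.
have -> : (k != Ordinal jn) = true by apply/eqP => e; move: kj; rewrite e eqxx.
by [].
Qed.

Lemma LIM0 {R : realType} {A : comAlgType R[i]} {nrm : A -> R} {star : A -> A}
  (HA : is_CStar nrm star) (P : nat -> A) (j : nat) (c : A) : star c = c ->
  (forall n, (j < n)%N -> exists q, SOSe star q /\ P n = c * c + q) ->
  conv nrm P 0 -> c = 0.
Proof.
move=> sc hq hc.
apply: (nrm_eq0 HA); apply/eqP; rewrite -sqrf_eq0; apply/eqP.
apply: small_eq0; first by rewrite exprn_ge0 //; apply: (nrm_ge0 HA).
move=> e e0; have e2 : 0 < e / 2 by rewrite divr_gt0.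
have [N HN] := hc _ e2.
set n := maxn N j.+1.
have h1 := HN n (leq_maxl _ _); rewrite subr0 in h1.
have [q [sq Pq]] := hq n (leq_maxr _ _).
have := MONO HA sc sq e2; rewrite -Pq => h.
apply: (le_lt_trans h); lra.
Qed.

Lemma POS0 {R : realType} {A : comAlgType R[i]} {nrm : A -> R} {star : A -> A}
  (HA : is_CStar nrm star) (x : nat -> A) :
  conv nrm (fun n => \sum_(k < n) star (x k) * x k) 0 -> forall j, x j = 0.
Proof.
move=> hc j.
set y := fun k : nat => if k == j then 0 else x k.
have [a [b [sa sb ew]]] := decomp HA (x j).
have a0 : a = 0.
  apply: (LIM0 HA (j := j) sa _ hc) => n jn.
  exists (\sum_(k < n) star (y k) * y k + b * b); split.
    by apply: (SOSe_sq HA _ sb); apply: (SOSe_sum HA).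
  by rewrite (split_sum HA x jn) ew -!addrA [b * b + _]addrC.
have b0 : b = 0.
  apply: (LIM0 HA (j := j) sb _ hc) => n jn.
  exists (\sum_(k < n) star (y k) * y k + a * a); split.
    by apply: (SOSe_sq HA _ sa); apply: (SOSe_sum HA).
  by rewrite (split_sum HA x jn) ew [a * a + _]addrC -!addrA [a * a + _]addrC.
rewrite a0 b0 !mul0r addr0 in ew.
apply: (nrm_eq0 HA); apply/eqP; rewrite -sqrf_eq0 -(cstar_identity HA) ew (nrm0 HA) //.
Qed.

Lemma ip_eq {R : realType} {A : comAlgType R[i]} {nrm : A -> R} {star : A -> A}
  (HA : is_CStar nrm star) (u v : nat -> A) (l : A) :
  conv nrm (fun n => \sum_(k < n) star (u k) * v k) l -> ip nrm star u v = l.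
Proof.
move=> h; rewrite /ip.
have := @epsilon_spec A (inhabits 0) (fun s => conv nrm (fun n => \sum_(k < n) star (u k) * v k) s).
move=> /(_ (ex_intro _ l h)) h2; exact: (conv_uniq HA h2 h).
Qed.

Lemma star_sum {R : realType} {A : comAlgType R[i]} {nrm : A -> R} {star : A -> A}
  (HA : is_CStar nrm star) (f : nat -> A) n :
  star (\sum_(k < n) f k) = \sum_(k < n) star (f k).
Proof.
elim: n => [|n IH]; first by rewrite !big_ord0 (star0 HA).
by rewrite !big_ord_recr /= (star_add HA) IH.
Qed.

Lemma fwd {R : realType} {A : comAlgType R[i]} {nrm : A -> R} {star : A -> A}
  (HA : is_CStar nrm star) (F : (nat -> A) -> (nat -> A))
  (HF : is_Ba nrm star F) (Hsa : is_selfadjoint nrm star F) (alpha : A) :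
  in_sigma_p nrm star F alpha -> in_sigma_p nrm star F (star alpha).
Proof.
case=> x [lx xn0 ex].
have Fx : F x = fun k => alpha * x k.
  apply: functional_extensionality => k.
  have := congr1 (fun f => f k) ex => /= /eqP; rewrite subr_eq0 => /eqP //.
have lx' := lx; case: lx' => s hs.
set P := fun n => \sum_(k < n) star (x k) * x k.
have e1 : ip nrm star (F x) x = star alpha * s.
  rewrite Fx; apply: (ip_eq HA).
  apply: (conv_ext (u := fun n => star alpha * P n)); last exact: (conv_mull HA _ hs).
  move=> n; rewrite /P mulr_sumr; apply: eq_bigr => k _.
  by rewrite (star_mul HA) mulrA [_ * star alpha]mulrC.
have e2 : ip nrm star x (F x) = alpha * s.
  rewrite Fx; apply: (ip_eq HA).
  apply: (conv_ext (u := fun n => alpha * P n)); last exact: (conv_mull HA _ hs).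
  move=> n; rewrite /P mulr_sumr; apply: eq_bigr => k _.
  by rewrite mulrCA.
have es : star alpha * s = alpha * s by rewrite -e1 -e2; apply: Hsa.
case: HF => _ _ mulF _ _.
exists (fun k => x k * s); split.
- exists (star s * s * s).
  apply: (conv_ext (u := fun n => star s * s * P n)); last exact: (conv_mull HA _ hs).
  move=> n; rewrite /P mulr_sumr; apply: eq_bigr => k _.
  rewrite (star_mul HA); ring.
- move=> hy.
  have xs : forall k, x k * s = 0 by move=> k; have := congr1 (fun f => f k) hy.
  have ss : star s = s.
    apply: (conv_uniq HA (u := P)) => //.
    apply: (conv_ext (u := fun n => star (P n))); last exact: (conv_star HA hs).
    move=> n; rewrite /P (star_sum HA (fun k => star (x k) * x k)); apply: eq_bigr => k _.
    by rewrite (star_mul HA) (star_invol HA).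
  have s2 : s * s = 0.
    apply: (conv_uniq HA (u := fun n => s * P n)); first exact: (conv_mull HA _ hs).
    apply: (conv_ext (u := fun _ => 0)); last exact: (conv_const HA).
    move=> n; rewrite /P mulr_sumr big1 // => k _.
    by rewrite mulrCA [s * _]mulrC xs mulr0.
  have s0 : s = 0.
    apply: (nrm_eq0 HA); apply/eqP; rewrite -sqrf_eq0 -(cstar_identity HA) ss s2 (nrm0 HA) //.
  rewrite s0 in hs.
  apply: xn0; apply: functional_extensionality => j; exact: (POS0 HA hs j).
- rewrite (mulF _ _ lx) Fx; apply: functional_extensionality => k /=.
  by rewrite mulrCA -mulrA es mulrCA subrr.
Qed.

Theorem lemma2p13 (R : realType) (A : comAlgType R[i])
    (nrm : A -> R) (star : A -> A) (HA : is_CStar nrm star)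
    (F : (nat -> A) -> (nat -> A))
    (HF : is_Ba nrm star F) (Hsa : is_selfadjoint nrm star F) :
  forall alpha : A,
    in_sigma_p nrm star F alpha <-> in_sigma_p nrm star F (star alpha).
Proof.
move=> alpha; split; first exact: (fwd HA HF Hsa).
by move=> h; rewrite -(star_invol HA alpha); apply: (fwd HA HF Hsa h).
Qed.
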